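(* Consider the model described in the context, and let $\lambda_s\in\mathbb{R}$ and $(\underline{\boldsymbol\mu}_s,\bar{\boldsymbol\mu}_s)\in\mathbb{R}_+^{L}\times\mathbb{R}_+^{L}$, $s\in S$, be any Lagrange multipliers associated with the supply-demand balance constraints and the line flow constraints, respectively, in $SYSTEM$. Let $\boldsymbol\delta\in\mathbb{R}^N$ be the constant appearing in $ED(\mathbf{d}_1)$. (a) If for each $n\in N$ $$\delta_n=\sum_{s\in S}p_s\big(\pi_n(\lambda_s,\underline{\boldsymbol\mu}_s,\bar{\boldsymbol\mu}_s)-\pi_n(\lambda_1,\underline{\boldsymbol\mu}_1,\bar{\boldsymbol\mu}_1)\big),\qquad(\ast)$$ then $SYSTEM$ can be optimally decomposed into $ED$-$FR$. (b) If $SYSTEM$ can be optimally decomposed into $ED$-$FR$, then, letting $(\mathbf{q}^b,\mathbf{q}^p,\mathbf{r}^p)$ be an optimal solution of $SYSTEM$ and $q^p_{1,n}:=q^p_n+r^p_{1,n}=q^p_n$, the identity $(\ast)$ holds for every $n\in N$ such that $\underline{q}_n^b<q_n^b<\bar{q}_n^b$ and $\underline{q}_n^p<q_{1,n}^p<\bar{q}_n^p$.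
   Context: Network: a connected directed graph with finite node set $N$ (also writing $N$ for its cardinality) and link set $L$; $\mathbf{C}\in\mathbb{R}^{N\times L}$ is its incidence matrix, $\mathbf{B}=\mathrm{diag}(B_l,l\in L)$ with $B_l>0$, $\mathbf{L}=\mathbf{C}\mathbf{B}\mathbf{C}^\top$, $\mathbf{H}=\mathbf{B}\mathbf{C}^\top\mathbf{L}^\dagger$ ($\dagger$ = Moore–Penrose pseudo-inverse), and $\mathbf{f}\in\mathbb{R}^L$ are line capacities. $\mathbf{1}$ is the all-ones vector in $\mathbb{R}^N$. Time/uncertainty: there are $K$ periods $1,\dots,K$ and a finite set $S$ of demand outcomes (a scenario tree); each $s\in S$ has a period $\kappa(s)\in\{1,\dots,K\}$, a probability $p_s$ conditioned on the period, with $\sum_{\{s:\kappa(s)=k\}}p_s=1$ for each $k$, and a demand vector $\mathbf{d}_s\in\mathbb{R}^N$. There is an outcome labeled $1\in S$ with $\kappa(1)=1$ and $p_1=1$. Generators: each node $n$ has a dispatch generator producing $q_n^b$ in all outcomes, with capacity $[\underline{q}_n^b,\bar{q}_n^b]$ and cost $c_n^b:[\underline{q}_n^b,\bar{q}_n^b]\to\mathbb{R}_+$, and a regulation generator producing $q_n^p+r_{s,n}^p$ in outcome $s$ (with $r^p_{1,n}:=0$), with capacity $[\underline{q}_n^p,\bar{q}_n^p]$ and cost $c_n^p:[\underline{q}_n^p,\bar{q}_n^p]\to\mathbb{R}_+$; all cost functions are strictly convex and continuously differentiable. Vectors: $\mathbf{q}^b=(q^b_n)$, $\mathbf{q}^p=(q^p_n)$,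 $\mathbf{r}^p_s=(r^p_{s,n})$, $\mathbf{r}^p=(\mathbf{r}^p_s,s\in S)$, and similarly for the bounds. Feasible set: $\Omega(\mathbf{d}_s)$ is the set of $(\mathbf{q}^b,\mathbf{q}^p,\mathbf{r}^p_s)$ with $\underline{\mathbf{q}}^b\le\mathbf{q}^b\le\bar{\mathbf{q}}^b$, $\underline{\mathbf{q}}^p\le\mathbf{q}^p+\mathbf{r}^p_s\le\bar{\mathbf{q}}^p$, $\mathbf{1}^\top(\mathbf{q}^b+\mathbf{q}^p+\mathbf{r}^p_s-\mathbf{d}_s)=0$ (balance constraint), and $-\mathbf{f}\le\mathbf{H}(\mathbf{q}^b+\mathbf{q}^p+\mathbf{r}^p_s-\mathbf{d}_s)\le\mathbf{f}$ (line flow constraint). $SYSTEM$: minimize $\sum_{s\in S}p_s\sum_{n\in N}\big(c_n^b(q_n^b)+c_n^p(q_n^p+r^p_{s,n})\big)$ over $(\mathbf{q}^b,\mathbf{q}^p,\mathbf{r}^p)$ subject to $(\mathbf{q}^b,\mathbf{q}^p,\mathbf{r}^p_s)\in\Omega(\mathbf{d}_s)$ for all $s\in S$ and $\mathbf{r}^p_1=\mathbf{0}$; this problem is assumed feasible. Lagrange multipliers are with respect to the Lagrangian in which the constraints of outcome $s$ are weighted by $p_s$: the balance constraint enters as $-p_s\lambda_s\mathbf{1}^\top(\mathbf{q}^b+\mathbf{q}^p+\mathbf{r}^p_s-\mathbf{d}_s)$ and the line constraints as $p_s\underline{\boldsymbol\mu}_s^\top(-\mathbf{f}-\mathbf{H}(\cdot))+p_s\bar{\boldsymbol\mu}_s^\top(\mathbf{H}(\cdot)-\mathbf{f})$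 with $\underline{\boldsymbol\mu}_s,\bar{\boldsymbol\mu}_s\ge0$ (regulation capacity constraints likewise weighted by $p_s$). Nodal prices: $\boldsymbol\pi(\lambda,\underline{\boldsymbol\mu},\bar{\boldsymbol\mu}):=\lambda\mathbf{1}+\mathbf{H}^\top(\underline{\boldsymbol\mu}-\bar{\boldsymbol\mu})\in\mathbb{R}^N$, with components $\pi_n$. Sub-problems: for a constant $\boldsymbol\delta\in\mathbb{R}^N$, $ED(\mathbf{d}_1)$: minimize $\sum_{n}\big(Kc_n^b(q_n^b)+Kc_n^p(q_n^p)-\delta_nq_n^b\big)$ over $(\mathbf{q}^b,\mathbf{q}^p)$ subject to $(\mathbf{q}^b,\mathbf{q}^p,\mathbf{0})\in\Omega(\mathbf{d}_1)$. $FR(\mathbf{q}^b,\mathbf{q}^p,\mathbf{d}_s)$: minimize $\sum_n c_n^p(q_n^p+r^p_{s,n})$ over $\mathbf{r}^p_s$ subject to $(\mathbf{q}^b,\mathbf{q}^p,\mathbf{r}^p_s)\in\Omega(\mathbf{d}_s)$. Definition: $SYSTEM$ can be optimally decomposed into $ED$-$FR$ if $(\mathbf{q}^b,\mathbf{q}^p,\mathbf{r}^p)$ is an optimal solution of $SYSTEM$ if and only if $\mathbf{r}^p_1=\mathbf{0}$, $(\mathbf{q}^b,\mathbf{q}^p)$ is an optimal solution of $ED(\mathbf{d}_1)$, and $\mathbf{r}^p_s$ is an optimal solution of $FR(\mathbf{q}^b,\mathbf{q}^p,\mathbf{d}_s)$ for all $s\in S$. *)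

(* Defs.v *)
From HB Require Import structures.
From mathcomp Require Import all_boot all_order all_algebra.
From mathcomp Require Import all_classical all_reals all_analysis.
Set Implicit Arguments. Unset Strict Implicit. Unset Printing Implicit Defensive.
Import Order.TTheory GRing.Theory Num.Theory.
Import numFieldNormedType.Exports.
Local Open Scope ring_scope.
Local Open Scope classical_set_scope.

Definition incidence (R : pzRingType) (N L : nat) (src dst : 'I_L -> 'I_N)
  : 'M[R]_(N, L) :=
  \matrix_(n < N, l < L) ((n == src l)%:R - (n == dst l)%:R).

Definition Bmat (R : pzRingType) (L : nat) (B : 'I_L -> R) : 'M[R]_L :=
  diag_mx (\row_l B l).

Definition laplacian (R : pzRingType) (N L : nat) (src dst : 'I_L -> 'I_N)
  (B : 'I_L -> R) : 'M[R]_N :=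
  incidence R src dst *m Bmat B *m (incidence R src dst)^T.

Definition is_MP_pinv (R : pzRingType) (n : nat) (A X : 'M[R]_n) : Prop :=
  [/\ A *m X *m A = A, X *m A *m X = X, (A *m X)^T = A *m X
    & (X *m A)^T = X *m A].

Definition graph_connected (N L : nat) (src dst : 'I_L -> 'I_N) : Prop :=
  let adj := [rel n m : 'I_N | [exists l : 'I_L,
      ((src l == n) && (dst l == m)) || ((src l == m) && (dst l == n))]] in
  forall n m : 'I_N, connect adj n m.

Definition strictly_convex_on (R : realType) (lo hi : R) (c : R -> R) : Prop :=
  forall x y t : R, lo <= x <= hi -> lo <= y <= hi -> x != y -> 0 < t < 1 ->
    c (t * x + (1 - t) * y) < t * c x + (1 - t) * c y.

Definition cost_ok (R : realType) (lo hi : R) (c : R -> R) : Prop :=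
  [/\ (forall x, lo <= x <= hi -> 0 <= c x),
      strictly_convex_on lo hi c,
      (forall x, lo <= x <= hi -> derivable c x 1)
    & {within [set x : R | lo <= x <= hi], continuous (derive1 c)}].

Record Model (R : realType) (N L : nat) (S : finType) := {
  Hm : 'M[R]_(L, N);
  fcap : 'cV[R]_L;
  K : nat;                    (* number of periods *)
  kappa : S -> nat;           (* period of an outcome *)
  prob : S -> R;
  dem : S -> 'cV[R]_N;
  s1 : S;
  qb_lo : 'cV[R]_N; qb_hi : 'cV[R]_N;
  qp_lo : 'cV[R]_N; qp_hi : 'cV[R]_N;
  cb : 'I_N -> R -> R;
  cp : 'I_N -> R -> R
}.

Section ModelDefs.
Context {R : realType} {N L : nat} {S : finType} (M : Model R N L S).

Definition onesN : 'cV[R]_N := const_mx 1.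

Definition Omega (d : 'cV[R]_N) (qb qp rs : 'cV[R]_N) : Prop :=
  [/\ (forall n, qb_lo M n 0 <= qb n 0 <= qb_hi M n 0),
      (forall n, qp_lo M n 0 <= qp n 0 + rs n 0 <= qp_hi M n 0),
      \sum_(n < N) (qb n 0 + qp n 0 + rs n 0 - d n 0) = 0
    & (forall l, - fcap M l 0 <= (Hm M *m (qb + qp + rs - d)) l 0
                 <= fcap M l 0)].

Definition system_feasible (qb qp : 'cV[R]_N) (r : S -> 'cV[R]_N) : Prop :=
  (forall s, Omega (dem M s) qb qp (r s)) /\ r (s1 M) = 0.

Definition system_obj (qb qp : 'cV[R]_N) (r : S -> 'cV[R]_N) : R :=
  \sum_(s : S) prob M s *
     \sum_(n < N) (cb M n (qb n 0) + cp M n (qp n 0 + r s n 0)).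

Definition system_opt (qb qp : 'cV[R]_N) (r : S -> 'cV[R]_N) : Prop :=
  system_feasible qb qp r /\
  forall qb' qp' r', system_feasible qb' qp' r' ->
    system_obj qb qp r <= system_obj qb' qp' r'.

Definition ed_obj (delta : 'cV[R]_N) (qb qp : 'cV[R]_N) : R :=
  \sum_(n < N) ((K M)%:R * cb M n (qb n 0) + (K M)%:R * cp M n (qp n 0)
                - delta n 0 * qb n 0).

Definition ed_opt (delta : 'cV[R]_N) (qb qp : 'cV[R]_N) : Prop :=
  Omega (dem M (s1 M)) qb qp 0 /\
  forall qb' qp', Omega (dem M (s1 M)) qb' qp' 0 ->
    ed_obj delta qb qp <= ed_obj delta qb' qp'.

Definition fr_obj (qp rs : 'cV[R]_N) : R :=
  \sum_(n < N) cp M n (qp n 0 + rs n 0).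

Definition fr_opt (qb qp d rs : 'cV[R]_N) : Prop :=
  Omega d qb qp rs /\
  forall rs', Omega d qb qp rs' -> fr_obj qp rs <= fr_obj qp rs'.

Definition optimally_decomposable (delta : 'cV[R]_N) : Prop :=
  forall qb qp (r : S -> 'cV[R]_N),
    system_opt qb qp r <->
    [/\ r (s1 M) = 0, ed_opt delta qb qp
      & forall s, fr_opt qb qp (dem M s) (r s)].

Definition nodal_price (lam : R) (mul muu : 'cV[R]_L) : 'cV[R]_N :=
  lam *: onesN + (Hm M)^T *m (mul - muu).

(* Lagrange (KKT) multipliers of SYSTEM associated with the balance
   constraints (lam) and the line flow constraints (mul, muu), w.r.t. the
   Lagrangian where the constraints of outcome s are weighted by p_s:
     L = obj - sum_s p_s lam_s 1^T(x_s)
             + sum_s p_s mul_s^T (-f - H x_s) + sum_s p_s muu_s^T (H x_s - f)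
             + sum_n nbl_n (qbl_n - qb_n) + sum_n nbu_n (qb_n - qbu_n)
             + sum_s p_s sum_n (npl_{s,n} (qpl_n - qp_n - r_{s,n})
                                 + npu_{s,n} (qp_n + r_{s,n} - qpu_n)),
   x_s = qb + qp + r_s - d_s, with r_{s1} = 0 fixed. *)
Definition lagrange_multipliers (lam : S -> R) (mul muu : S -> 'cV[R]_L)
  : Prop :=
  (forall s l, 0 <= mul s l 0 /\ 0 <= muu s l 0) /\
  exists (qb qp : 'cV[R]_N) (r : S -> 'cV[R]_N),
  system_opt qb qp r /\
  exists (nbl nbu : 'cV[R]_N) (npl npu : S -> 'cV[R]_N),
  let pi s := nodal_price (lam s) (mul s) (muu s) in
  let x s := qb + qp + r s - dem M s in
  [/\
      (forall n, 0 <= nbl n 0 /\ 0 <= nbu n 0 /\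
                 forall s, 0 <= npl s n 0 /\ 0 <= npu s n 0),
      (forall n, \sum_(s : S) prob M s * derive1 (cb M n) (qb n 0)
                 - \sum_(s : S) prob M s * pi s n 0
                 - nbl n 0 + nbu n 0 = 0),
      (forall n, \sum_(s : S) prob M s *
                   (derive1 (cp M n) (qp n 0 + r s n 0) - pi s n 0
                    - npl s n 0 + npu s n 0) = 0),
      (forall s n, s != s1 M ->
         prob M s * (derive1 (cp M n) (qp n 0 + r s n 0) - pi s n 0
                     - npl s n 0 + npu s n 0) = 0)
    &
      (forall n,
         nbl n 0 * (qb n 0 - qb_lo M n 0) = 0 /\
         nbu n 0 * (qb_hi M n 0 - qb n 0) = 0 /\
         forall s, npl s n 0 * (qp n 0 + r s n 0 - qp_lo M n 0) = 0 /\
                   npu s n 0 * (qp_hi M n 0 - qp n 0 - r s n 0) = 0) /\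
      (forall s l,
         mul s l 0 * ((Hm M *m x s) l 0 + fcap M l 0) = 0 /\
         muu s l 0 * (fcap M l 0 - (Hm M *m x s) l 0) = 0)].

End ModelDefs.

(* Main.v *)
Require Import Defs.
From HB Require Import structures.
From mathcomp Require Import all_boot all_order all_algebra.
From mathcomp Require Import all_classical all_reals all_analysis.
From mathcomp Require Import ring lra.
Import Order.TTheory GRing.Theory Num.Theory.
Local Open Scope ring_scope.

Section S.
Import numFieldNormedType.Exports.
Local Open Scope classical_set_scope.
Variable R : realType.
Lemma dq_right (f : R -> R) x m e : derivable f x 1 -> 0 < e ->
  (forall h, 0 < h < e -> (f (x + h) - f x) / h <= m) -> f^`() x <= m.
Proof.
move=> df e0 H.
rewrite derive1E ['D_1 f x]cvg_at_rightE; last exact: df.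
apply: limr_le.
  rewrite -(cvg_at_rightE (fun h : R => h^-1 *: ((f \o shift x) _ - f x))) //.
  apply: cvg_trans df; apply: cvg_app.
  move=> A [e' e'gt0 Ae]; exists e' => // y ye ygt0; apply: Ae => //.
  exact/lt0r_neq0.
near=> h.
rewrite /= [_%:A]mulr1 (addrC h x) -[_ *: _]/(_ * _) mulrC; apply: H.
near: h; exists e => // y; rewrite /= distrC subr0 => hy y0.
by rewrite y0 /=; exact: (le_lt_trans (ler_norm _)).
Unshelve. all: by end_near. Qed.

Lemma dq_left (f : R -> R) x m e : derivable f x 1 -> 0 < e ->
  (forall h, 0 < h < e -> m <= (f (x - h) - f x) / (- h)) -> m <= f^`() x.
Proof.
move=> df e0 H.
rewrite derive1E ['D_1 f x]cvg_at_leftE; last exact: df.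
apply: limr_ge.
  rewrite -(cvg_at_leftE (fun h : R => h^-1 *: ((f \o shift x) _ - f x))) //.
  apply: cvg_trans df; apply: cvg_app.
  move=> A [e' e'gt0 Ae]; exists e' => // y ye ygt0; apply: Ae => //.
  exact/ltr0_neq0.
near=> h.
rewrite /= [_%:A]mulr1 (addrC h x) -[_ *: _]/(_ * _) mulrC -[h]opprK; apply: H.
near: h; exists e => // y; rewrite /= distrC subr0 => hy y0.
rewrite oppr_gt0 y0 /=; rewrite -normrN in hy; exact: (le_lt_trans (ler_norm _)).
Unshelve. all: by end_near. Qed.

Lemma gi (c : R -> R) lo hi x y : strictly_convex_on lo hi c ->
  (forall z, lo <= z <= hi -> derivable c z 1) -> lo <= x <= hi -> lo <= y <= hi ->
  derive1 c x * (y - x) <= c y - c x.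
Proof.
move=> Hc Hd hx hy.
have [xy|yx|<-] := ltgtP x y; last by rewrite !subrr mulr0.
- have d0 : 0 < y - x by rewrite subr_gt0.
  rewrite -ler_pdivlMr //; apply: (@dq_right _ _ _ (y - x)) => //; first exact: Hd.
  move=> h /andP[h0 hd].
  set t := h / (y - x).
  have th : t * (y - x) = h by rewrite /t divfK // gt_eqF.
  have t0 : 0 < t by rewrite /t divr_gt0.
  have t1 : t < 1 by rewrite /t ltr_pdivrMr // mul1r.
  have := Hc y x t hy hx (negbT (gt_eqF xy)) (introT andP (conj t0 t1)).
  have -> : t * y + (1 - t) * x = x + h by rewrite -th; ring.
  move=> H1.
  rewrite ler_pdivrMr //.
  have -> : (c y - c x) / (y - x) * h = t * (c y - c x).
    by rewrite -th; field; rewrite gt_eqF.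
  lra.
- have d0 : 0 < x - y by rewrite subr_gt0.
  have d1 : y - x < 0 by rewrite subr_lt0.
  rewrite -ler_ndivrMr //; apply: (@dq_left _ _ _ (x - y)) => //; first exact: Hd.
  move=> h /andP[h0 hd].
  set t := h / (x - y).
  have th : t * (x - y) = h by rewrite /t divfK // gt_eqF.
  have t0 : 0 < t by rewrite /t divr_gt0.
  have t1 : t < 1 by rewrite /t ltr_pdivrMr // mul1r.
  have := Hc y x t hy hx (negbT (lt_eqF yx)) (introT andP (conj t0 t1)).
  have -> : t * y + (1 - t) * x = x - h by rewrite -th; ring.
  move=> H1.
  have hn : - h < 0 by rewrite oppr_lt0.
  rewrite ler_ndivlMr //.
  have -> : (c y - c x) / (y - x) * - h = t * (c y - c x).
    by rewrite -th; field; rewrite lt_eqF.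
  lra.
Qed.

Lemma gis (c : R -> R) lo hi x y : strictly_convex_on lo hi c ->
  (forall z, lo <= z <= hi -> derivable c z 1) -> lo <= x <= hi -> lo <= y <= hi ->
  y != x -> derive1 c x * (y - x) < c y - c x.
Proof.
move=> Hc Hd hx hy yx.
set z := (x + y) / 2.
have hz : lo <= z <= hi.
  case/andP: hx => ??; case/andP: hy => ??; apply/andP; split; rewrite /z; lra.
have h1 := @gi c lo hi x z Hc Hd hx hz.
have h12 : (0 < (2:R)^-1) && ((2:R)^-1 < 1) by rewrite invr_gt0 ltr0n /= invf_lt1 // ?ltr1n // ltr0n.
have yx2 : x != y by rewrite eq_sym.
have h2 := Hc x y ((2:R)^-1) hx hy yx2 h12.
have ez : (2:R)^-1 * x + (1 - (2:R)^-1) * y = z by rewrite /z; field.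
rewrite ez in h2.
have ez2 : z - x = (y - x) / 2 by rewrite /z; field.
rewrite ez2 mulrA in h1.
lra.
Qed.
Lemma dcomp_aff (f : R -> R) (a s : R) : derivable f a 1 ->
  derivable (fun e : R => f (a + s * e)) 0 1 /\ derive1 (fun e : R => f (a + s * e)) 0 = s * derive1 f a.
Proof.
move=> df.
have hi : is_derive (0:R) 1 (fun e : R => a + s * e) s.
  have -> : (fun e : R => a + s * e) = cst a + (fun e => s *: id e) by apply/funext => e.
  apply: is_derive_eq. by rewrite add0r /= scaler1.
have di : derivable (fun e : R => a + s * e) 0 1 by case: hi.
have df' : derivable f ((fun e : R => a + s * e) 0) 1 by rewrite /= mulr0 addr0.
change (fun e => f (a + s * e)) with (f \o (fun e : R => a + s * e)).
split.
  apply/derivable1_diffP; apply: differentiable_comp; exact/derivable1_diffP.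
rewrite (derive1_comp di df') /= mulr0 addr0 mulrC; congr (_ * _).
by rewrite derive1E derive_val.
Qed.

Lemma fermat2 (cb cp : R -> R) (a b Kr dl eta : R) :
  derivable cb a 1 -> derivable cp b 1 -> 0 < eta ->
  (forall e, - eta < e < eta ->
     Kr * cb a + Kr * cp b - dl * a <= Kr * cb (a + e) + Kr * cp (b - e) - dl * (a + e)) ->
  Kr * derive1 cb a - Kr * derive1 cp b - dl = 0.
Proof.
move=> dcb dcp e0 H.
have [d1 v1] := @dcomp_aff cb a 1 dcb.
have [d2 v2] := @dcomp_aff cp b (-1) dcp.
set g1 := (fun e : R => cb (a + 1 * e)) in d1 v1.
set g2 := (fun e : R => cp (b + -1 * e)) in d2 v2.
have i1 : is_derive (0:R) 1 g1 (derive1 g1 0) by rewrite derive1E; apply: derivableP.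
have i2 : is_derive (0:R) 1 g2 (derive1 g2 0) by rewrite derive1E; apply: derivableP.
set psi := (fun e : R => dl * a) + dl *: (@id R) - Kr *: g1 - Kr *: g2.
have ip : is_derive (0:R) 1 psi (dl - Kr * derive1 cb a + Kr * derive1 cp b).
  apply: is_derive_eq. rewrite v1 v2 add0r [dl%:A]mulr1 mul1r mulN1r. rewrite -[Kr *: _]/(Kr * _) -[Kr *: (- _)]/(Kr * (- _)). ring.
have pe : forall h, psi h = dl * a + dl * h - Kr * cb (a + h) - Kr * cp (b - h).
  move=> h; rewrite -[LHS]/(dl*a + dl*h - Kr*cb(a+1*h) - Kr*cp(b + -1*h)).
  by rewrite mul1r mulN1r.
have dv : derive1 psi 0 = dl - Kr * derive1 cb a + Kr * derive1 cp b.
  by rewrite derive1E derive_val.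
have dp : derivable psi 0 1 by case: ip.
have r1 := @dq_right psi 0 0 eta dp e0.
have r2 := @dq_left psi 0 0 eta dp e0.
rewrite dv in r1 r2.
have : dl - Kr * derive1 cb a + Kr * derive1 cp b <= 0.
  apply: r1 => h /andP[h0 he].
  rewrite !pe add0r subr0 addr0; apply: mulr_le0_ge0; last by rewrite invr_ge0 ltW.
  have := H h; rewrite (lt_trans _ h0) ?he ?oppr_lt0 //= => /(_ isT). lra.
have : 0 <= dl - Kr * derive1 cb a + Kr * derive1 cp b.
  apply: r2 => h /andP[h0 he].
  rewrite !pe add0r subr0 addr0 opprK; apply: mulr_le0; last by rewrite invr_le0 oppr_le0 ltW.
  have hh : - eta < - h < eta by apply/andP; split; lra.
  have := H (- h) hh; rewrite opprK. lra.
lra.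
Qed.
End S.


Set Implicit Arguments. Unset Strict Implicit.

Section B.
Variable R : realType.

Lemma sum0 (I : finType) (G : I -> R) :
  (forall i, 0 <= G i) -> \sum_i G i <= 0 -> forall i, G i = 0.
Proof.
move=> G0 Gs i.
have E : \sum_i G i = 0 by apply/le_anti; rewrite Gs sumr_ge0.
exact: (psumr_eq0P (fun i _ => G0 i) E).
Qed.

Lemma sum0w (I J : finType) (p : J -> R) (G : J -> I -> R) :
  (forall s, 0 < p s) -> (forall s n, 0 <= G s n) ->
  \sum_s p s * \sum_n G s n <= 0 -> forall s n, G s n = 0.
Proof.
move=> p0 G0 Hs s n.
have T0 : forall s, 0 <= p s * \sum_n G s n.
  by move=> s'; apply: mulr_ge0; [exact: ltW | exact: sumr_ge0].
have := sum0 T0 Hs s => /eqP; rewrite mulf_eq0 gt_eqF //= => /eqP E.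
apply: (@sum0 I (G s)) => //; by rewrite E.
Qed.

Lemma lin_rearrange (I J : finType) (p : J -> R) (cbd db : I -> R)
  (cpd dp pi np : J -> I -> R) (nl nu : I -> R) :
  (forall n, \sum_s p s * cbd n - \sum_s p s * pi s n - nl n + nu n = 0) ->
  (forall s n, cpd s n = pi s n + np s n) ->
  \sum_s p s * \sum_n (cbd n * db n + cpd s n * dp s n) =
  \sum_n (nl n - nu n) * db n +
  \sum_s p s * (\sum_n pi s n * (db n + dp s n) + \sum_n np s n * dp s n).
Proof.
move=> Hb Hp.
have E1 : \sum_s p s * \sum_n (cbd n * db n + cpd s n * dp s n) =
  \sum_s p s * \sum_n (cbd n * db n) + \sum_s p s * \sum_n (cpd s n * dp s n).
  by rewrite -big_split /=; apply: eq_bigr => s _; rewrite big_split mulrDr.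
have E2 : \sum_s p s * \sum_n (cbd n * db n) =
          \sum_n (\sum_s p s * cbd n) * db n.
  under eq_bigr do rewrite mulr_sumr.
  rewrite exchange_big /=; apply: eq_bigr => n _; rewrite mulr_suml.
  by apply: eq_bigr => s _; rewrite mulrA.
have E3 : \sum_n (\sum_s p s * cbd n) * db n =
   \sum_n (nl n - nu n) * db n + \sum_n (\sum_s p s * pi s n) * db n.
  rewrite -big_split /=; apply: eq_bigr => n _; rewrite -mulrDl; congr (_ * _).
  have := Hb n; lra.
have E4 : \sum_n (\sum_s p s * pi s n) * db n =
          \sum_s p s * \sum_n (pi s n * db n).
  under [RHS]eq_bigr do rewrite mulr_sumr.
  rewrite [RHS]exchange_big /=; apply: eq_bigr => n _; rewrite mulr_suml.
  by apply: eq_bigr => s _; rewrite mulrA.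
rewrite E1 E2 E3 E4 -addrA; congr (_ + _).
rewrite -big_split /=; apply: eq_bigr => s _; rewrite -mulrDr; congr (_ * _).
rewrite -!big_split /=; apply: eq_bigr => n _; by rewrite Hp mulrDl mulrDr addrA.
Qed.

Lemma box_ge0 (nl nu lo hi z z0 : R) : 0 <= nl -> 0 <= nu ->
  nl * (z0 - lo) = 0 -> nu * (hi - z0) = 0 -> lo <= z <= hi ->
  0 <= (nl - nu) * (z - z0).
Proof.
move=> h1 h2 h3 h4 /andP[h5 h6].
have h7 : 0 <= nl * (z - lo) by rewrite mulr_ge0 // subr_ge0.
have h8 : 0 <= nu * (hi - z) by rewrite mulr_ge0 // subr_ge0.
have -> : (nl - nu) * (z - z0) =
  nl * (z - lo) + nu * (hi - z) - nl * (z0 - lo) - nu * (hi - z0) by ring.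
rewrite h3 h4; lra.
Qed.

Lemma sumP_K (S : finType) (kappa : S -> nat) (p : S -> R) (K : nat) :
  (forall s, (1 <= kappa s <= K)%N) ->
  (forall k, (1 <= k <= K)%N -> \sum_(s | kappa s == k) p s = 1) ->
  \sum_s p s = K%:R.
Proof.
move=> hk hs.
have E : forall s, p s = \sum_(1 <= k < K.+1) (kappa s == k)%:R * p s.
  move=> s; rewrite (bigD1_seq (kappa s)) /= ?iota_uniq //; last first.
    by rewrite mem_index_iota ltnS.
  rewrite eqxx mul1r big1_seq ?addr0 // => k /andP[/negbTE nk _].
  by rewrite eq_sym nk mul0r.
rewrite (eq_bigr _ (fun s _ => E s)) exchange_big /=.
rewrite big_nat_cond (eq_bigr (fun _ => 1)).
  by rewrite -big_nat_cond sumr_const_nat subn1.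
move=> k /andP[/andP[k1 kK] _].
transitivity (\sum_(s | kappa s == k) p s); last by apply: hs; rewrite k1 -ltnS.
rewrite [RHS]big_mkcond /=.
by apply: eq_bigr => s _; case: (kappa s == k); rewrite ?mul1r ?mul0r.
Qed.
End B.

Lemma Gge0 (R : realType) (c : R -> R) lo hi x y : cost_ok lo hi c ->
  lo <= x <= hi -> lo <= y <= hi -> 0 <= c y - c x - derive1 c x * (y - x).
Proof.
case=> _ Hc Hd _ hx hy; have := @gi R c lo hi x y Hc Hd hx hy; lra.
Qed.

Lemma Geq (R : realType) (c : R -> R) lo hi x y : cost_ok lo hi c ->
  lo <= x <= hi -> lo <= y <= hi -> c y - c x - derive1 c x * (y - x) = 0 -> y = x.
Proof.
case=> _ Hc Hd _ hx hy H; apply/eqP; apply: contraT => yx.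
have := @gis R c lo hi x y Hc Hd hx hy yx; lra.
Qed.

Lemma box_of (R : realType) (N L : nat) (S : finType) (M : Model R N L S) d qb qp rs :
  Omega M d qb qp rs -> forall n, (qb_lo M n 0 <= qb n 0 <= qb_hi M n 0) /\
    (qp_lo M n 0 <= qp n 0 + rs n 0 <= qp_hi M n 0).
Proof. by case=> h1 h2 _ _ n; split. Qed.

Section Main.
Variables (R : realType) (N L : nat) (S : finType) (M : Model R N L S).
Hypothesis Hprob : forall s, 0 < prob M s.
Hypothesis Hp1 : prob M (s1 M) = 1.
Hypothesis Hcb : forall n, cost_ok (qb_lo M n 0) (qb_hi M n 0) (cb M n).
Hypothesis Hcp : forall n, cost_ok (qp_lo M n 0) (qp_hi M n 0) (cp M n).
Variables (lam : S -> R) (mul muu : S -> 'cV[R]_L).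
Hypothesis Hmu : forall s l, 0 <= mul s l 0 /\ 0 <= muu s l 0.
Variables (qb0 qp0 : 'cV[R]_N) (r0 : S -> 'cV[R]_N).
Hypothesis Hopt : system_opt M qb0 qp0 r0.
Variables (nbl nbu : 'cV[R]_N) (npl npu : S -> 'cV[R]_N).
Local Notation pi s := (nodal_price M (lam s) (mul s) (muu s)).
Hypothesis Hdual : forall n, 0 <= nbl n 0 /\ 0 <= nbu n 0 /\
  forall s, 0 <= npl s n 0 /\ 0 <= npu s n 0.
Hypothesis Hstb : forall n, \sum_(s : S) prob M s * derive1 (cb M n) (qb0 n 0)
  - \sum_(s : S) prob M s * pi s n 0 - nbl n 0 + nbu n 0 = 0.
Hypothesis Hstp : forall n, \sum_(s : S) prob M s *
  (derive1 (cp M n) (qp0 n 0 + r0 s n 0) - pi s n 0 - npl s n 0 + npu s n 0) = 0.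
Hypothesis Hstr : forall s n, s != s1 M ->
  prob M s * (derive1 (cp M n) (qp0 n 0 + r0 s n 0) - pi s n 0
              - npl s n 0 + npu s n 0) = 0.
Hypothesis Hcsq : forall n,
  nbl n 0 * (qb0 n 0 - qb_lo M n 0) = 0 /\
  nbu n 0 * (qb_hi M n 0 - qb0 n 0) = 0 /\
  forall s, npl s n 0 * (qp0 n 0 + r0 s n 0 - qp_lo M n 0) = 0 /\
            npu s n 0 * (qp_hi M n 0 - qp0 n 0 - r0 s n 0) = 0.
Hypothesis Hcsl : forall s l,
  mul s l 0 * ((Hm M *m (qb0 + qp0 + r0 s - dem M s)) l 0 + fcap M l 0) = 0 /\
  muu s l 0 * (fcap M l 0 - (Hm M *m (qb0 + qp0 + r0 s - dem M s)) l 0) = 0.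

Lemma L_feas s : Omega M (dem M s) qb0 qp0 (r0 s).
Proof. by case: Hopt => [[h _] _]. Qed.

Lemma L_r1 : r0 (s1 M) = 0.
Proof. by case: Hopt => [[_ h] _]. Qed.

Lemma L_D1 s n : derive1 (cp M n) (qp0 n 0 + r0 s n 0) =
  pi s n 0 + (npl s n 0 - npu s n 0).
Proof.
have [/eqP-> | ns] := boolP (s == s1 M).
  have := Hstp n; rewrite (bigD1 (s1 M)) //= big1 ?addr0 ?Hp1 ?mul1r.
    lra.
  by move=> s' ns'; apply: Hstr.
have := @Hstr s n ns => /eqP; rewrite mulf_eq0 gt_eqF //= => /eqP; lra.
Qed.

Lemma L_PL s qb qp rs : Omega M (dem M s) qb qp rs ->
  0 <= \sum_n pi s n 0 * ((qb n 0 + qp n 0 + rs n 0) - (qb0 n 0 + qp0 n 0 + r0 s n 0)).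
Proof.
case=> _ _ Hbal Hline.
have [_ _ Hbal0 _] := L_feas s.
have [Hmu' Hcsl'] := (Hmu s, Hcsl s).
set Y := qb + qp + rs - dem M s in Hline *.
set X := qb0 + qp0 + r0 s - dem M s in Hcsl' *.
have eY n : Y n 0 = qb n 0 + qp n 0 + rs n 0 - dem M s n 0 by rewrite !mxE.
have eX n : X n 0 = qb0 n 0 + qp0 n 0 + r0 s n 0 - dem M s n 0 by rewrite !mxE.
have epi n : pi s n 0 = lam s + \sum_l Hm M l n * (mul s l 0 - muu s l 0).
  rewrite /nodal_price !mxE mulr1; congr (_ + _); apply: eq_bigr => l _.
  by rewrite !mxE.
have eH (A : 'cV[R]_N) l : (Hm M *m A) l 0 = \sum_n Hm M l n * A n 0.
  by rewrite mxE.
have -> : \sum_n pi s n 0 * ((qb n 0 + qp n 0 + rs n 0) - (qb0 n 0 + qp0 n 0 + r0 s n 0))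
   = \sum_n pi s n 0 * (Y n 0 - X n 0).
  by apply: eq_bigr => n _; rewrite eY eX; congr (_ * _); ring.
have E : \sum_n pi s n 0 * (Y n 0 - X n 0) =
  lam s * (\sum_n Y n 0 - \sum_n X n 0) +
  \sum_l (mul s l 0 - muu s l 0) * ((Hm M *m Y) l 0 - (Hm M *m X) l 0).
  under eq_bigr do rewrite epi mulrDl.
  rewrite big_split /= -mulr_sumr sumrB; congr (_ + _).
  under [RHS]eq_bigr do rewrite !eH -sumrB mulr_sumr.
  rewrite [RHS]exchange_big /=; apply: eq_bigr => n _; rewrite mulr_suml.
  by apply: eq_bigr => l _; ring.
have sY : \sum_n Y n 0 = 0 by rewrite -[RHS]Hbal; apply: eq_bigr => n _; rewrite eY.
have sX : \sum_n X n 0 = 0 by rewrite -[RHS]Hbal0; apply: eq_bigr => n _; rewrite eX.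
rewrite E sY sX subrr mulr0 add0r; apply: sumr_ge0 => l _.
have [m0 u0] := Hmu' l; have [c1 c2] := Hcsl' l.
have /andP[l1 l2] := Hline l.
have p1 : 0 <= mul s l 0 * ((Hm M *m Y) l 0 + fcap M l 0).
  by apply: mulr_ge0 => //; lra.
have p2 : 0 <= muu s l 0 * (fcap M l 0 - (Hm M *m Y) l 0).
  by apply: mulr_ge0 => //; lra.
lra.
Qed.

Lemma L_sys qb qp r : system_feasible M qb qp r ->
  system_obj M qb qp r <= system_obj M qb0 qp0 r0 ->
  [/\ qb = qb0, qp = qp0 & forall s, r s = r0 s].
Proof.
case=> Hf Hr1 Hle.
pose cbd n := derive1 (cb M n) (qb0 n 0).
pose cpd s n := derive1 (cp M n) (qp0 n 0 + r0 s n 0).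
pose db n := qb n 0 - qb0 n 0.
pose dp s n := (qp n 0 + r s n 0) - (qp0 n 0 + r0 s n 0).
pose Gb n := cb M n (qb n 0) - cb M n (qb0 n 0) - cbd n * db n.
pose Gp s n := cp M n (qp n 0 + r s n 0) - cp M n (qp0 n 0 + r0 s n 0) - cpd s n * dp s n.
have bb n := (box_of (Hf (s1 M)) n).1.
have bb0 n := (box_of (L_feas (s1 M)) n).1.
have bp s n := (box_of (Hf s) n).2.
have bp0 s n := (box_of (L_feas s) n).2.
have Gb0 n : 0 <= Gb n := Gge0 (Hcb n) (bb0 n) (bb n).
have Gp0 s n : 0 <= Gp s n := Gge0 (Hcp n) (bp0 s n) (bp s n).
have dec : system_obj M qb qp r - system_obj M qb0 qp0 r0 =
    \sum_s prob M s * \sum_n (Gb n + Gp s n) +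
    \sum_s prob M s * \sum_n (cbd n * db n + cpd s n * dp s n).
  rewrite /system_obj -sumrB -big_split /=; apply: eq_bigr => s _.
  rewrite -mulrBr -mulrDr; congr (_ * _).
  rewrite -sumrB -big_split /=; apply: eq_bigr => n _.
  rewrite /Gb /Gp; ring.
have lin : 0 <= \sum_s prob M s * \sum_n (cbd n * db n + cpd s n * dp s n).
  rewrite (@lin_rearrange R 'I_N S (prob M) cbd db cpd dp (fun s n => pi s n 0)
     (fun s n => npl s n 0 - npu s n 0) (fun n => nbl n 0) (fun n => nbu n 0)); last 2 first.
  - exact: Hstb.
  - exact: L_D1.
  apply: addr_ge0.
    apply: sumr_ge0 => n _; have [d1 [d2 _]] := Hdual n; have [c1 [c2 _]] := Hcsq n.
    exact: box_ge0 d1 d2 c1 c2 (bb n).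
  apply: sumr_ge0 => s _; apply: mulr_ge0; first exact: ltW.
  apply: addr_ge0.
    have := L_PL (Hf s); congr (_ <= _); apply: eq_bigr => n _; congr (_ * _).
    rewrite /db /dp; ring.
  apply: sumr_ge0 => n _; have [_ [_ hs]] := Hdual n; have [a1 a2] := hs s.
  have [_ [_ cs]] := Hcsq n; have [e1 e2] := cs s.
  apply: box_ge0 a1 a2 e1 _ (bp s n); by rewrite opprD addrA.
have G0 : \sum_s prob M s * \sum_n (Gb n + Gp s n) <= 0.
  have : system_obj M qb qp r - system_obj M qb0 qp0 r0 <= 0 by rewrite subr_le0.
  rewrite dec; lra.
have Z := sum0w Hprob (fun s n => addr_ge0 (Gb0 n) (Gp0 s n)) G0.
have Zb n : Gb n = 0.
  have := Z (s1 M) n; have := Gb0 n; have := Gp0 (s1 M) n; lra.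
have Zp s n : Gp s n = 0.
  have := Z s n; have := Gb0 n; have := Gp0 s n; lra.
have eb n : qb n 0 = qb0 n 0 := Geq (Hcb n) (bb0 n) (bb n) (Zb n).
have ep s n : qp n 0 + r s n 0 = qp0 n 0 + r0 s n 0 :=
  Geq (Hcp n) (bp0 s n) (bp s n) (Zp s n).
have eq n : qp n 0 = qp0 n 0.
  by have := ep (s1 M) n; rewrite Hr1 L_r1 !mxE !addr0.
split.
- by apply/matrixP => i j; rewrite (ord1 j); exact: eb.
- by apply/matrixP => i j; rewrite (ord1 j); exact: eq.
- move=> s; apply/matrixP => i j; rewrite (ord1 j); have := ep s i; rewrite eq.
  exact: addrI.
Qed.

Variable delta : 'cV[R]_N.
Hypothesis HPK : \sum_s prob M s = (K M)%:R.
Hypothesis HK : 0 < (K M)%:R :> R.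

Lemma r10 n : r0 (s1 M) n 0 = 0.
Proof. by rewrite L_r1 mxE. Qed.

Lemma L_ed (Hdel : forall n, delta n 0 = \sum_s prob M s * (pi s n 0 - pi (s1 M) n 0))
  qb qp : Omega M (dem M (s1 M)) qb qp 0 ->
  ed_obj M delta qb0 qp0 <= ed_obj M delta qb qp /\
  (ed_obj M delta qb qp <= ed_obj M delta qb0 qp0 -> qb = qb0 /\ qp = qp0).
Proof.
move=> Hf.
pose db n := qb n 0 - qb0 n 0.
pose dq n := qp n 0 - qp0 n 0.
pose Gb n := cb M n (qb n 0) - cb M n (qb0 n 0) - derive1 (cb M n) (qb0 n 0) * db n.
pose Gq n := cp M n (qp n 0) - cp M n (qp0 n 0) - derive1 (cp M n) (qp0 n 0) * dq n.
have bb n := (box_of Hf n).1.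
have bq n : qp_lo M n 0 <= qp n 0 <= qp_hi M n 0.
  by have := (box_of Hf n).2; rewrite mxE addr0.
have bb0 n := (box_of (L_feas (s1 M)) n).1.
have bq0 n : qp_lo M n 0 <= qp0 n 0 <= qp_hi M n 0.
  by have := (box_of (L_feas (s1 M)) n).2; rewrite r10 addr0.
have Gb0 n : 0 <= Gb n := Gge0 (Hcb n) (bb0 n) (bb n).
have Gq0 n : 0 <= Gq n := Gge0 (Hcp n) (bq0 n) (bq n).
have hcq n : derive1 (cp M n) (qp0 n 0) =
    pi (s1 M) n 0 + (npl (s1 M) n 0 - npu (s1 M) n 0).
  by rewrite -(L_D1 (s1 M) n) r10 addr0.
have hcb n : (K M)%:R * derive1 (cb M n) (qb0 n 0) - delta n 0 =
    (K M)%:R * pi (s1 M) n 0 + (nbl n 0 - nbu n 0).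
  have e1 : \sum_s prob M s * derive1 (cb M n) (qb0 n 0) =
            (K M)%:R * derive1 (cb M n) (qb0 n 0) by rewrite -mulr_suml HPK.
  have e2 : delta n 0 = \sum_s prob M s * pi s n 0 - (K M)%:R * pi (s1 M) n 0.
    by rewrite Hdel; under eq_bigr do rewrite mulrBr; rewrite sumrB -mulr_suml HPK.
  have := Hstb n; lra.
have dec : ed_obj M delta qb qp - ed_obj M delta qb0 qp0 =
    \sum_n (K M)%:R * (Gb n + Gq n) +
    \sum_n (((K M)%:R * derive1 (cb M n) (qb0 n 0) - delta n 0) * db n +
            (K M)%:R * derive1 (cp M n) (qp0 n 0) * dq n).
  rewrite /ed_obj -sumrB -big_split /=; apply: eq_bigr => n _.
  rewrite /Gb /Gq /db /dq; ring.
have lin : 0 <= \sum_n (((K M)%:R * derive1 (cb M n) (qb0 n 0) - delta n 0) * db n +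
            (K M)%:R * derive1 (cp M n) (qp0 n 0) * dq n).
  have -> : \sum_n (((K M)%:R * derive1 (cb M n) (qb0 n 0) - delta n 0) * db n +
            (K M)%:R * derive1 (cp M n) (qp0 n 0) * dq n) =
     \sum_n (nbl n 0 - nbu n 0) * db n + (K M)%:R *
     (\sum_n pi (s1 M) n 0 * (db n + dq n) +
      \sum_n (npl (s1 M) n 0 - npu (s1 M) n 0) * dq n).
    rewrite -[X in _ = _ + _ * X]big_split /= mulr_sumr -big_split /=.
    by apply: eq_bigr => n _; rewrite hcb hcq; ring.
  apply: addr_ge0.
    apply: sumr_ge0 => n _; have [d1 [d2 _]] := Hdual n; have [c1 [c2 _]] := Hcsq n.
    exact: box_ge0 d1 d2 c1 c2 (bb n).
  apply: mulr_ge0; first exact: ltW.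
  apply: addr_ge0.
    have := L_PL Hf; congr (_ <= _); apply: eq_bigr => n _; congr (_ * _).
    rewrite /db /dq r10 mxE; ring.
  apply: sumr_ge0 => n _; have [_ [_ hs]] := Hdual n; have [a1 a2] := hs (s1 M).
  have [_ [_ cs]] := Hcsq n; have [e1 e2] := cs (s1 M).
  rewrite r10 addr0 in e1; rewrite r10 subr0 in e2.
  exact: box_ge0 a1 a2 e1 e2 (bq n).
split.
  rewrite -subr_ge0 dec; apply: addr_ge0 => //; apply: sumr_ge0 => n _.
  by apply: mulr_ge0; [exact: ltW | exact: addr_ge0].
move=> Hle.
have G0 : \sum_n (K M)%:R * (Gb n + Gq n) <= 0.
  have : ed_obj M delta qb qp - ed_obj M delta qb0 qp0 <= 0 by rewrite subr_le0.
  rewrite dec; lra.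
have Z := sum0 (fun n => mulr_ge0 (ltW HK) (addr_ge0 (Gb0 n) (Gq0 n))) G0.
have Z' n : Gb n + Gq n = 0.
  by have /eqP := Z n; rewrite mulf_eq0 gt_eqF //= => /eqP.
have Zb n : Gb n = 0 by have := Z' n; have := Gb0 n; have := Gq0 n; lra.
have Zq n : Gq n = 0 by have := Z' n; have := Gb0 n; have := Gq0 n; lra.
have eb n : qb n 0 = qb0 n 0 := Geq (Hcb n) (bb0 n) (bb n) (Zb n).
have eq n : qp n 0 = qp0 n 0 := Geq (Hcp n) (bq0 n) (bq n) (Zq n).
split.
- by apply/matrixP => i j; rewrite (ord1 j); exact: eb.
- by apply/matrixP => i j; rewrite (ord1 j); exact: eq.
Qed.

Lemma L_fr s rs : Omega M (dem M s) qb0 qp0 rs ->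
  fr_obj M qp0 (r0 s) <= fr_obj M qp0 rs /\
  (fr_obj M qp0 rs <= fr_obj M qp0 (r0 s) -> rs = r0 s).
Proof.
move=> Hf.
pose dr n := (qp0 n 0 + rs n 0) - (qp0 n 0 + r0 s n 0).
pose Gp n := cp M n (qp0 n 0 + rs n 0) - cp M n (qp0 n 0 + r0 s n 0)
   - derive1 (cp M n) (qp0 n 0 + r0 s n 0) * dr n.
have bp n := (box_of Hf n).2.
have bp0 n := (box_of (L_feas s) n).2.
have Gp0 n : 0 <= Gp n := Gge0 (Hcp n) (bp0 n) (bp n).
have dec : fr_obj M qp0 rs - fr_obj M qp0 (r0 s) =
   \sum_n Gp n + \sum_n derive1 (cp M n) (qp0 n 0 + r0 s n 0) * dr n.
  rewrite /fr_obj -sumrB -big_split /=; apply: eq_bigr => n _.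
  rewrite /Gp; ring.
have lin : 0 <= \sum_n derive1 (cp M n) (qp0 n 0 + r0 s n 0) * dr n.
  have -> : \sum_n derive1 (cp M n) (qp0 n 0 + r0 s n 0) * dr n =
    \sum_n pi s n 0 * dr n + \sum_n (npl s n 0 - npu s n 0) * dr n.
    by rewrite -big_split /=; apply: eq_bigr => n _; rewrite L_D1; ring.
  apply: addr_ge0.
    have := L_PL Hf; congr (_ <= _); apply: eq_bigr => n _; congr (_ * _).
    rewrite /dr; ring.
  apply: sumr_ge0 => n _; have [_ [_ hs]] := Hdual n; have [a1 a2] := hs s.
  have [_ [_ cs]] := Hcsq n; have [e1 e2] := cs s.
  apply: box_ge0 a1 a2 e1 _ (bp n); by rewrite opprD addrA.
split.
  rewrite -subr_ge0 dec; apply: addr_ge0 => //; exact: sumr_ge0.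
move=> Hle.
have G0 : \sum_n Gp n <= 0.
  have : fr_obj M qp0 rs - fr_obj M qp0 (r0 s) <= 0 by rewrite subr_le0.
  rewrite dec; lra.
have Z := sum0 Gp0 G0.
apply/matrixP => i j; rewrite (ord1 j).
have := Geq (Hcp i) (bp0 i) (bp i) (Z i); exact: addrI.
Qed.

Lemma Thm_a (Hdel : forall n, delta n 0 = \sum_s prob M s * (pi s n 0 - pi (s1 M) n 0)) :
  optimally_decomposable M delta.
Proof.
move=> qb qp r; split.
- case=> Hyf Hymin.
  have [eb eq er] := L_sys Hyf (Hymin _ _ _ Hopt.1).
  subst qb qp.
  have -> : r = r0 by apply: funext.
  split.
  + exact: L_r1.
  + split; first by have := L_feas (s1 M); rewrite L_r1.
    by move=> qb' qp' Hf'; exact: (L_ed Hdel Hf').1.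
  + move=> s; split; first exact: L_feas.
    by move=> rs' Hf'; exact: (L_fr Hf').1.
- case=> Hr1 [Hedf Hedmin] Hfr.
  have f0 : Omega M (dem M (s1 M)) qb0 qp0 0.
    by have := L_feas (s1 M); rewrite L_r1.
  have [eb eq] := (L_ed Hdel Hedf).2 (Hedmin _ _ f0).
  subst qb qp.
  have -> : r = r0.
    apply: funext => s; have [Hfs Hfm] := Hfr s.
    exact: (L_fr Hfs).2 (Hfm _ (L_feas s)).
  exact: Hopt.
Qed.

Lemma Thm_b : optimally_decomposable M delta ->
  forall qb qp (r : S -> 'cV[R]_N), system_opt M qb qp r ->
  forall n,
    qb_lo M n 0 < qb n 0 < qb_hi M n 0 ->
    qp_lo M n 0 < qp n 0 + r (s1 M) n 0 < qp_hi M n 0 ->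
    delta n 0 = \sum_s prob M s * (pi s n 0 - pi (s1 M) n 0).
Proof.
move=> Hdec qb qp r [Hyf Hymin] n hb hp.
have [eb eq er] := L_sys Hyf (Hymin _ _ _ Hopt.1).
subst qb qp; rewrite er r10 addr0 in hp.
have [_ [Hedf Hedmin] _] := (Hdec qb0 qp0 r0).1 Hopt.
case/andP: hb => hb1 hb2; case/andP: hp => hp1 hp2.
pose eta := Num.min (Num.min (qb0 n 0 - qb_lo M n 0) (qb_hi M n 0 - qb0 n 0))
                    (Num.min (qp0 n 0 - qp_lo M n 0) (qp_hi M n 0 - qp0 n 0)).
have eta0 : 0 < eta by rewrite /eta !lt_min !subr_gt0 hb1 hb2 hp1 hp2.
have g1 : eta <= qb0 n 0 - qb_lo M n 0 by rewrite /eta !ge_min lexx.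
have g2 : eta <= qb_hi M n 0 - qb0 n 0 by rewrite /eta !ge_min lexx ?orbT.
have g3 : eta <= qp0 n 0 - qp_lo M n 0 by rewrite /eta !ge_min lexx ?orbT.
have g4 : eta <= qp_hi M n 0 - qp0 n 0 by rewrite /eta !ge_min lexx ?orbT.
have [_ _ dcb _] := Hcb n; have [_ _ dcp _] := Hcp n.
have bb0 : qb_lo M n 0 <= qb0 n 0 <= qb_hi M n 0 by rewrite !ltW.
have bq0 : qp_lo M n 0 <= qp0 n 0 <= qp_hi M n 0 by rewrite !ltW.
have key := @fermat2 R (cb M n) (cp M n) (qb0 n 0) (qp0 n 0) (K M)%:R (delta n 0) eta
  (dcb _ bb0) (dcp _ bq0) eta0.
have {key} key : (K M)%:R * derive1 (cb M n) (qb0 n 0) -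
     (K M)%:R * derive1 (cp M n) (qp0 n 0) - delta n 0 = 0.
  apply: key => e /andP[el eu].
  pose u : 'cV[R]_N := delta_mx n 0.
  pose qb' := qb0 + e *: u.
  pose qp' := qp0 - e *: u.
  have qbE m : qb' m 0 = qb0 m 0 + e * (m == n)%:R by rewrite !mxE eqxx andbT.
  have qpE m : qp' m 0 = qp0 m 0 - e * (m == n)%:R by rewrite !mxE eqxx andbT.
  have [Fb Fp Fbal Fl] := L_feas (s1 M).
  have F : Omega M (dem M (s1 M)) qb' qp' 0.
    split.
    - move=> m; rewrite qbE; case: (eqVneq m n) => [->|nm].
        by rewrite mulr1; apply/andP; split; lra.
      by rewrite mulr0 addr0; exact: Fb.
    - move=> m; rewrite qpE mxE addr0; case: (eqVneq m n) => [->|nm].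
        by rewrite mulr1; apply/andP; split; lra.
      by have := Fp m; rewrite mulr0 subr0 L_r1 mxE addr0.
    - rewrite -[RHS]Fbal; apply: eq_bigr => m _; rewrite qbE qpE L_r1 !mxE; ring.
    - have -> : qb' + qp' + 0 - dem M (s1 M) = qb0 + qp0 + r0 (s1 M) - dem M (s1 M).
        by apply/matrixP => i j; rewrite /qb' /qp' L_r1 !mxE; ring.
      exact: Fl.
  have := Hedmin qb' qp' F.
  rewrite /ed_obj (bigD1 n) //= [X in _ <= X](bigD1 n) //=.
  have -> : \sum_(m < N | m != n) ((K M)%:R * cb M m (qb' m 0) + (K M)%:R * cp M m (qp' m 0)
              - delta m 0 * qb' m 0) =
            \sum_(m < N | m != n) ((K M)%:R * cb M m (qb0 m 0) + (K M)%:R * cp M m (qp0 m 0)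
              - delta m 0 * qb0 m 0).
    by apply: eq_bigr => m nm; rewrite qbE qpE (negbTE nm) mulr0 addr0 subr0.
  rewrite qbE qpE eqxx mulr1; lra.
have [c1 [c2 cs]] := Hcsq n; have [c3 c4] := cs (s1 M).
rewrite r10 addr0 in c3; rewrite r10 subr0 in c4.
have z1 : nbl n 0 = 0.
  by apply/eqP; move: c1 => /eqP; rewrite mulf_eq0 subr_eq0 (gt_eqF hb1) orbF.
have z2 : nbu n 0 = 0.
  by apply/eqP; move: c2 => /eqP; rewrite mulf_eq0 subr_eq0 (gt_eqF hb2) orbF.
have z3 : npl (s1 M) n 0 = 0.
  by apply/eqP; move: c3 => /eqP; rewrite mulf_eq0 subr_eq0 (gt_eqF hp1) orbF.
have z4 : npu (s1 M) n 0 = 0.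
  by apply/eqP; move: c4 => /eqP; rewrite mulf_eq0 subr_eq0 (gt_eqF hp2) orbF.
have e1 : \sum_s prob M s * derive1 (cb M n) (qb0 n 0) =
          (K M)%:R * derive1 (cb M n) (qb0 n 0) by rewrite -mulr_suml HPK.
have hcq : derive1 (cp M n) (qp0 n 0) = pi (s1 M) n 0.
  by have := L_D1 (s1 M) n; rewrite r10 addr0 z3 z4 subrr addr0.
have -> : \sum_s prob M s * (pi s n 0 - pi (s1 M) n 0) =
          \sum_s prob M s * pi s n 0 - (K M)%:R * pi (s1 M) n 0.
  by under eq_bigr do rewrite mulrBr; rewrite sumrB -mulr_suml HPK.
have k2 : (K M)%:R * derive1 (cb M n) (qb0 n 0) - (K M)%:R * derive1 (cp M n) (qp0 n 0) - delta n 0 = 0 := key.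
rewrite hcq in k2; have := Hstb n; rewrite z1 z2; lra.
Qed.
End Main.
Theorem theorem1 (R : realType) (N L : nat) (S : finType)
  (src dst : 'I_L -> 'I_N) (B : 'I_L -> R) (Lpinv : 'M[R]_N)
  (M : Model R N L S)
  (* network *)
  (Hnoloop : forall l, src l != dst l)
  (Hconn : graph_connected src dst)
  (HB : forall l, 0 < B l)
  (HLpinv : is_MP_pinv (laplacian src dst B) Lpinv)
  (HH : Hm M = Bmat B *m (incidence R src dst)^T *m Lpinv)
  (* scenario tree *)
  (Hkappa : forall s, (1 <= kappa M s <= K M)%N)
  (Hprob : forall s, 0 < prob M s)
  (Hpsum : forall k, (1 <= k <= K M)%N ->
             \sum_(s : S | kappa M s == k) prob M s = 1)
  (Hs1 : kappa M (s1 M) = 1%N) (Hp1 : prob M (s1 M) = 1)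
  (* generators *)
  (Hcb : forall n, cost_ok (qb_lo M n 0) (qb_hi M n 0) (cb M n))
  (Hcp : forall n, cost_ok (qp_lo M n 0) (qp_hi M n 0) (cp M n))
  (* SYSTEM is feasible *)
  (Hfeas : exists qb qp r, system_feasible M qb qp r)
  (* any Lagrange multipliers of SYSTEM, and the constant delta of ED *)
  (lam : S -> R) (mul muu : S -> 'cV[R]_L)
  (Hmult : lagrange_multipliers M lam mul muu)
  (delta : 'cV[R]_N) :
  let pi s := nodal_price M (lam s) (mul s) (muu s) in
  ((forall n, delta n 0 = \sum_(s : S) prob M s * (pi s n 0 - pi (s1 M) n 0)) ->
     optimally_decomposable M delta)
  /\
  (optimally_decomposable M delta ->
     forall qb qp (r : S -> 'cV[R]_N), system_opt M qb qp r ->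
     forall n,
       qb_lo M n 0 < qb n 0 < qb_hi M n 0 ->
       qp_lo M n 0 < qp n 0 + r (s1 M) n 0 < qp_hi M n 0 ->
       delta n 0 = \sum_(s : S) prob M s * (pi s n 0 - pi (s1 M) n 0)).
Proof.
move=> pi.
case: Hmult => Hmu [qb0 [qp0 [r0 [Hopt [nbl [nbu [npl [npu H]]]]]]]].
case: H => Hdual Hstb Hstp Hstr [Hcsq Hcsl].
have HPK : \sum_s prob M s = (K M)%:R := sumP_K Hkappa Hpsum.
have HK : 0 < (K M)%:R :> R.
  by have /andP[h1 h2] := Hkappa (s1 M); rewrite ltr0n (leq_trans h1 h2).
split.
- move=> Hdel; apply: Thm_a; eassumption.
- apply: Thm_b; eassumption.
Qed.
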